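(* If there exists a natural number $n>60$ with $\sigma(n)\ge\exp(H_n)\log(H_n)$ (a counterexample to the Kaneko–Lagarias inequality), then the smallest such counterexample is a superabundant number. Consequently, the Kaneko–Lagarias inequality $\sigma(n)<\exp(H_n)\log(H_n)$ holds for all $n>60$ if and only if it holds for all superabundant $n>60$.
   Context: $\sigma(n)=\sum_{d\mid n}d$ is the sum-of-divisors function and $H_n=1+\frac12+\cdots+\frac1n$ is the $n$-th harmonic number. A natural number $n$ is superabundant if $\sigma(m)/m<\sigma(n)/n$ for all natural numbers $m<n$. *)

(* Defs.v *)
From Stdlib Require Import Reals Lra Lia List.
Open Scope R_scope.

Definition sigma (n : nat) : nat :=
  fold_right Nat.add 0%nat
    (filter (fun d => Nat.eqb (Nat.modulo n d) 0) (seq 1 n)).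

Fixpoint harmonic (n : nat) : R :=
  match n with
  | O => 0
  | S k => harmonic k + / INR (S k)
  end.

Definition KL (n : nat) : Prop :=
  INR (sigma n) < exp (harmonic n) * ln (harmonic n).

Definition superabundant (n : nat) : Prop :=
  (1 <= n)%nat /\
  forall m : nat, (1 <= m < n)%nat ->
    INR (sigma m) / INR m < INR (sigma n) / INR n.

(* Main.v *)
From Pilot Require Import Defs.
From Stdlib Require Import Reals Lra Lia QArith Qreals List.
Import Pilot.Defs.
Open Scope R_scope.
Lemma exp_lb_step x a b : 0 <= a -> a <= exp (x/2) -> b <= a*a -> b <= exp x.
Proof.
  intros Ha H1 H2. replace x with (x/2 + x/2) by field. rewrite exp_plus.
  apply Rle_trans with (a*a); auto. apply Rmult_le_compat; lra.
Qed.
Lemma exp_ub_step x a b : 0 <= a -> exp (x/2) <= a -> a*a <= b -> exp x <= b.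
Proof.
  intros Ha H1 H2. replace x with (x/2 + x/2) by field. rewrite exp_plus.
  apply Rle_trans with (a*a); auto. pose proof (exp_pos (x/2)).
  apply Rmult_le_compat; lra.
Qed.
Lemma exp_ub_base y a : y < 1 -> 1 <= a * (1 - y) -> exp y <= a.
Proof.
  intros Hy Ha. pose proof (exp_ineq1_le (-y)). rewrite exp_Ropp in H.
  pose proof (exp_pos y).
  assert (1 - y <= / exp y) by lra.
  apply Rmult_le_reg_r with (/ exp y). apply Rinv_0_lt_compat; lra.
  rewrite Rinv_r by lra. apply Rle_trans with (a*(1-y)); auto.
  apply Rmult_le_compat_l; [|lra]. nra.
Qed.
Lemma exp_4695 : 109.1 <= exp (4695/1000).
Proof.
  apply Rle_trans with (109105057845520/1000000000000); [lra|].
  apply (exp_lb_step _ (10445336655442/1000000000000)); [lra| |lra].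
  apply (exp_lb_step _ (3231924605470/1000000000000)); [lra| |lra].
  apply (exp_lb_step _ (1797755435389/1000000000000)); [lra| |lra].
  apply (exp_lb_step _ (1340804025721/1000000000000)); [lra| |lra].
  apply (exp_lb_step _ (1157930924417/1000000000000)); [lra| |lra].
  apply (exp_lb_step _ (1076071988492/1000000000000)); [lra| |lra].
  apply (exp_lb_step _ (1037338897609/1000000000000)); [lra| |lra].
  apply (exp_lb_step _ (1018498354250/1000000000000)); [lra| |lra].
  apply (exp_lb_step _ (1009206794592/1000000000000)); [lra| |lra].
  apply (exp_lb_step _ (1004592850160/1000000000000)); [lra| |lra].
  apply (exp_lb_step _ (1002293794334/1000000000000)); [lra| |lra].
  apply (exp_lb_step _ (1001146240234/1000000000000)); [lra| |lra].
  eapply Rle_trans; [|apply exp_ineq1_le]; lra.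
Qed.

Lemma exp_5187 : 178.3 <= exp (5187/1000).
Proof.
  apply Rle_trans with (178344748651959/1000000000000); [lra|].
  apply (exp_lb_step _ (13354577816313/1000000000000)); [lra| |lra].
  apply (exp_lb_step _ (3654391579499/1000000000000)); [lra| |lra].
  apply (exp_lb_step _ (1911646300836/1000000000000)); [lra| |lra].
  apply (exp_lb_step _ (1382622978558/1000000000000)); [lra| |lra].
  apply (exp_lb_step _ (1175849896270/1000000000000)); [lra| |lra].
  apply (exp_lb_step _ (1084366126486/1000000000000)); [lra| |lra].
  apply (exp_lb_step _ (1041329019324/1000000000000)); [lra| |lra].
  apply (exp_lb_step _ (1020455300013/1000000000000)); [lra| |lra].
  apply (exp_lb_step _ (1010175875783/1000000000000)); [lra| |lra].
  apply (exp_lb_step _ (1005075059776/1000000000000)); [lra| |lra].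
  apply (exp_lb_step _ (1002534318503/1000000000000)); [lra| |lra].
  apply (exp_lb_step _ (1001266357421/1000000000000)); [lra| |lra].
  eapply Rle_trans; [|apply exp_ineq1_le]; lra.
Qed.

Lemma exp_154 : exp (154/100) <= 4.671.
Proof.
  apply Rle_trans with (4670000464881/1000000000000); [|lra].
  apply (exp_ub_step _ (2161018386058/1000000000000)); [lra| |lra].
  apply (exp_ub_step _ (1470040266815/1000000000000)); [lra| |lra].
  apply (exp_ub_step _ (1212452170939/1000000000000)); [lra| |lra].
  apply (exp_ub_step _ (1101114059005/1000000000000)); [lra| |lra].
  apply (exp_ub_step _ (1049339820556/1000000000000)); [lra| |lra].
  apply (exp_ub_step _ (1024372891361/1000000000000)); [lra| |lra].
  apply (exp_ub_step _ (1012113082299/1000000000000)); [lra| |lra].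
  apply (exp_ub_step _ (1006038310552/1000000000000)); [lra| |lra].
  apply (exp_ub_step _ (1003014611335/1000000000000)); [lra| |lra].
  apply (exp_ub_step _ (1001506171391/1000000000000)); [lra| |lra].
  apply exp_ub_base; lra.
Qed.

Lemma exp_164 : exp (164/100) <= 5.162.
Proof.
  apply Rle_trans with (5161951401646/1000000000000); [|lra].
  apply (exp_ub_step _ (2271992826055/1000000000000)); [lra| |lra].
  apply (exp_ub_step _ (1507313114802/1000000000000)); [lra| |lra].
  apply (exp_ub_step _ (1227726807886/1000000000000)); [lra| |lra].
  apply (exp_ub_step _ (1108028342546/1000000000000)); [lra| |lra].
  apply (exp_ub_step _ (1052629252180/1000000000000)); [lra| |lra].
  apply (exp_ub_step _ (1025977218158/1000000000000)); [lra| |lra].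
  apply (exp_ub_step _ (1012905335240/1000000000000)); [lra| |lra].
  apply (exp_ub_step _ (1006431982421/1000000000000)); [lra| |lra].
  apply (exp_ub_step _ (1003210836475/1000000000000)); [lra| |lra].
  apply (exp_ub_step _ (1001604131618/1000000000000)); [lra| |lra].
  apply exp_ub_base; lra.
Qed.


Lemma ln_le_lem x y : 0 < x -> x <= y -> ln x <= ln y.
Proof. intros Hx Hxy. destruct (Rle_lt_or_eq_dec _ _ Hxy) as [h|h].
  - left. apply ln_increasing; auto. - subst; lra. Qed.
Lemma exp_le_lem x y : x <= y -> exp x <= exp y.
Proof. intros Hxy. destruct (Rle_lt_or_eq_dec _ _ Hxy) as [h|h].
  - left. apply exp_increasing; auto. - subst; lra. Qed.
Lemma ln_le_sub1 x : 0 < x -> ln x <= x - 1.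
Proof. intros Hx. pose proof (exp_ineq1_le (ln x)). rewrite exp_ln in H; lra. Qed.
Lemma ln_ge_1inv x : 0 < x -> 1 - / x <= ln x.
Proof. intros Hx. pose proof (ln_le_sub1 (/x) (Rinv_0_lt_compat _ Hx)).
  rewrite ln_Rinv in H by auto. lra. Qed.

Lemma harmonic_S n : harmonic (S n) = harmonic n + / INR (S n).
Proof. reflexivity. Qed.

Lemma H_ge1 n : (1 <= n)%nat -> 1 <= harmonic n.
Proof.
  induction n as [|n IH]; intros Hn; [lia|].
  rewrite harmonic_S. destruct n.
  - simpl. lra.
  - assert (0 < / INR (S (S n))) by (apply Rinv_0_lt_compat, lt_0_INR; lia).
    specialize (IH ltac:(lia)). lra.
Qed.

Definition g n := exp (harmonic n) * ln (harmonic n) / INR n.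

Lemma g_step n : (1 <= n)%nat -> harmonic (S n) * harmonic (S n) <= INR (S n) -> g n <= g (S n).
Proof.
  intros Hn Hsq. unfold g. rewrite harmonic_S in *.
  set (H := harmonic n) in *. set (N1 := INR (S n)) in *.
  assert (HN : INR n = N1 - 1) by (unfold N1; rewrite S_INR; lra).
  rewrite HN.
  assert (HN1 : 2 <= N1) by (unfold N1; rewrite S_INR; apply (le_INR 1) in Hn; simpl in Hn; lra).
  assert (H1 : 1 <= H) by (apply H_ge1; auto).
  set (H' := H + / N1) in *.
  assert (Hd : H' - H = / N1) by (unfold H'; lra).
  assert (Hpos : 0 < / N1) by (apply Rinv_0_lt_compat; lra).
  assert (HH' : H < H') by lra.
  set (E := exp H). assert (HE : 0 < E) by apply exp_pos.
  assert (HE' : E * (1 + / N1) <= exp H').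
  { unfold H', E. rewrite exp_plus. apply Rmult_le_compat_l; [left; apply exp_pos|]. apply exp_ineq1_le. }
  set (L := ln H). set (L' := ln H').
  assert (HL : 0 <= L) by (unfold L; rewrite <- ln_1; apply ln_le_lem; lra).
  assert (HL' : L' <= H' - 1) by (unfold L'; apply ln_le_sub1; lra).
  assert (HLL : 1 - H / H' <= L' - L).
  { unfold L, L'. replace (ln H' - ln H) with (ln (H' / H)).
    - replace (1 - H / H') with (1 - / (H'/H)) by (field; lra). apply ln_ge_1inv.
      apply Rdiv_lt_0_compat; lra.
    - unfold Rdiv. rewrite ln_mult, ln_Rinv; try lra. apply Rinv_0_lt_compat; lra. }
  assert (HL'0 : L <= L') by (unfold L, L'; apply ln_le_lem; lra).
  (* key: L' <= N1^2 (L' - L) *)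
  assert (Hk1 : 1 - H / H' = / (N1 * H')).
  { field_simplify_eq; try split; try lra. unfold H'. field. lra. }
  assert (Hkey : L' * (N1 - 1) * (N1 + 1) >= L * N1 * N1).
  { assert (N1 / H' >= H').
    { apply Rle_ge. apply Rmult_le_reg_r with H'; [lra|].
      unfold Rdiv. rewrite Rmult_assoc, Rinv_l by lra. lra. }
    assert (N1 * N1 * (L' - L) >= N1 / H').
    { rewrite Hk1 in HLL. apply Rle_ge.
      replace (N1 / H') with (N1 * N1 * / (N1 * H')) by (field; lra).
      apply Rmult_le_compat_l; nra. }
    nra. }
  apply Rle_trans with (E * (1 + / N1) * L' / N1).
  - unfold Rdiv. apply Rmult_le_reg_r with ((N1 - 1) * N1 * N1); [nra|].
    replace (E * L * / (N1 - 1) * ((N1 - 1) * N1 * N1)) with (E * (L * N1 * N1)) by (field; lra).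
    replace (E * (1 + / N1) * L' * / N1 * ((N1 - 1) * N1 * N1)) with (E * (L' * (N1 - 1) * (N1 + 1))) by (field; lra).
    apply Rmult_le_compat_l; lra.
  - unfold Rdiv. apply Rmult_le_compat_r; [left; apply Rinv_0_lt_compat; lra|].
    apply Rmult_le_compat_r; lra.
Qed.

Fixpoint hq (n : nat) : Q :=
  match n with
  | O => 0%Q
  | S k => Qred (hq k + / inject_Z (Z.of_nat (S k)))%Q
  end.

Lemma hq_S n : hq (S n) = Qred (hq n + / inject_Z (Z.of_nat (S n)))%Q.
Proof. reflexivity. Qed.

Lemma hq_ok n : Q2R (hq n) = harmonic n.
Proof.
  induction n as [|n IH].
  - unfold Q2R; simpl; lra.
  - rewrite hq_S, harmonic_S, <- IH.
    rewrite (Qeq_eqR _ _ (Qred_correct _)), Q2R_plus, Q2R_inv.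
    + f_equal. f_equal. rewrite INR_IZR_INZ. unfold Q2R, inject_Z. simpl. lra.
    + unfold inject_Z, Qeq. simpl. lia.
Qed.

Lemma H61_lb : 4695/1000 <= harmonic 61.
Proof.
  rewrite <- hq_ok. replace (4695/1000) with (Q2R (4695#1000)) by (unfold Q2R; simpl; lra).
  apply Qle_Rle. vm_compute. discriminate.
Qed.
Lemma H61_ub : harmonic 61 <= 5.
Proof.
  rewrite <- hq_ok. replace 5 with (Q2R (5#1)) by (unfold Q2R; simpl; lra).
  apply Qle_Rle. vm_compute. discriminate.
Qed.
Lemma H100_lb : 5187/1000 <= harmonic 100.
Proof.
  rewrite <- hq_ok. replace (5187/1000) with (Q2R (5187#1000)) by (unfold Q2R; simpl; lra).
  apply Qle_Rle. vm_compute. discriminate.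
Qed.

Lemma INR_ge n k : (k <= n)%nat -> INR k <= INR n.
Proof. apply le_INR. Qed.

Lemma H_sq n : (61 <= n)%nat -> harmonic n * harmonic n <= INR n.
Proof.
  induction n as [|n IH]; intros Hn; [lia|].
  destruct (Nat.eq_dec n 60) as [->|Hne].
  - pose proof H61_lb. pose proof H61_ub.
    replace (INR 61) with 61 by (simpl; lra). nra.
  - specialize (IH ltac:(lia)). rewrite harmonic_S, S_INR.
    assert (HN : 61 <= INR n).
    { replace 61 with (INR 61) by (simpl; lra). apply le_INR; lia. }
    set (H := harmonic n) in *. set (N := INR n) in *.
    assert (H0 : 0 <= H) by (unfold H; pose proof (H_ge1 n ltac:(lia)); lra).
    assert (HH : H <= N / 4) by nra.
    set (e := / (N + 1)).
    assert (He : e * (N + 1) = 1) by (unfold e; field; lra).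
    assert (He0 : 0 < e) by (unfold e; apply Rinv_0_lt_compat; lra).
    assert (He1 : e <= 1) by nra.
    assert (H2 : 2 * H * e <= 1 / 2) by nra.
    nra.
Qed.

Lemma g_mono m n : (61 <= m <= n)%nat -> g m <= g n.
Proof.
  intros [Hm Hmn]. induction Hmn as [|n Hmn IH]; [lra|].
  apply Rle_trans with (g n); auto. apply g_step; [lia|]. apply H_sq. lia.
Qed.

Lemma ln_lb_of_exp c x : 0 < x -> exp c <= x -> c <= ln x.
Proof. intros Hx Hc. rewrite <- (ln_exp c). apply ln_le_lem; auto. apply exp_pos. Qed.

Lemma g61 : 272/100 < g 61.
Proof.
  unfold g. pose proof H61_lb. pose proof exp_4695. pose proof exp_154.
  assert (A : 109.1 <= exp (harmonic 61)) by (eapply Rle_trans; [eauto|]; apply exp_le_lem; auto).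
  assert (B : 154/100 <= ln (harmonic 61)) by (apply ln_lb_of_exp; lra).
  replace (INR 61) with 61 by (simpl; lra).
  apply Rmult_lt_reg_r with 61; [lra|].
  replace (exp (harmonic 61) * ln (harmonic 61) / 61 * 61) with (exp (harmonic 61) * ln (harmonic 61)) by (field; lra).
  nra.
Qed.

Lemma g100 : 28/10 < g 100.
Proof.
  unfold g. pose proof H100_lb. pose proof exp_5187. pose proof exp_164.
  assert (A : 178.3 <= exp (harmonic 100)) by (eapply Rle_trans; [eauto|]; apply exp_le_lem; auto).
  assert (B : 164/100 <= ln (harmonic 100)) by (apply ln_lb_of_exp; lra).
  replace (INR 100) with 100 by (simpl; lra).
  apply Rmult_lt_reg_r with 100; [lra|].
  replace (exp (harmonic 100) * ln (harmonic 100) / 100 * 100) with (exp (harmonic 100) * ln (harmonic 100)) by (field; lra).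
  nra.
Qed.

Lemma sig_small_b : forallb (fun m => Nat.leb (5 * sigma m) (14 * m)) (seq 1 60) = true.
Proof. vm_compute. reflexivity. Qed.
Lemma sig_mid_b : forallb (fun m => Nat.leb (100 * sigma m) (272 * m)) (seq 61 39) = true.
Proof. vm_compute. reflexivity. Qed.

Lemma ratio_le m a b : (1 <= m)%nat -> (1 <= a)%nat -> (a * sigma m <= b * m)%nat ->
  INR (sigma m) / INR m <= INR b / INR a.
Proof.
  intros Hm Ha H. destruct a as [|a].
  - lia.
  - apply le_INR in H. rewrite !mult_INR in H.
    assert (0 < INR m) by (apply lt_0_INR; lia).
    assert (0 < INR (S a)) by (apply lt_0_INR; lia).
    apply Rmult_le_reg_r with (INR m * INR (S a)); [nra|].
    replace (INR (sigma m) / INR m * (INR m * INR (S a))) with (INR (S a) * INR (sigma m)) by (field; lra).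
    replace (INR b / INR (S a) * (INR m * INR (S a))) with (INR b * INR m) by (field; lra).
    lra.
Qed.

Lemma sig_small m : (1 <= m <= 60)%nat -> INR (sigma m) / INR m <= 28/10.
Proof.
  intros Hm. pose proof sig_small_b as Hb. rewrite forallb_forall in Hb.
  specialize (Hb m ltac:(apply in_seq; lia)). apply Nat.leb_le in Hb.
  eapply Rle_trans; [apply (ratio_le m 5 14); lia|]. simpl. lra.
Qed.
Lemma sig_mid m : (61 <= m <= 99)%nat -> INR (sigma m) / INR m <= 272/100.
Proof.
  intros Hm. pose proof sig_mid_b as Hb. rewrite forallb_forall in Hb.
  specialize (Hb m ltac:(apply in_seq; lia)). apply Nat.leb_le in Hb.
  eapply Rle_trans; [apply (ratio_le m 100 272); lia|].
  replace (INR 272) with 272 by (simpl; lra). replace (INR 100) with 100 by (simpl; lra). lra.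
Qed.

Lemma notKL_g n : (1 <= n)%nat -> ~ KL n -> g n <= INR (sigma n) / INR n.
Proof.
  intros Hn H. unfold KL in H. apply Rnot_lt_le in H. unfold g, Rdiv.
  apply Rmult_le_compat_r; auto. left. apply Rinv_0_lt_compat, lt_0_INR; lia.
Qed.
Lemma KL_g n : (1 <= n)%nat -> KL n -> INR (sigma n) / INR n < g n.
Proof.
  intros Hn H. unfold KL in H. unfold g, Rdiv.
  apply Rmult_lt_compat_r; auto. apply Rinv_0_lt_compat, lt_0_INR; lia.
Qed.

Lemma part1 : forall n0 : nat,
      (60 < n0)%nat -> ~ KL n0 ->
      (forall m : nat, (60 < m < n0)%nat -> KL m) ->
      superabundant n0.
Proof.
  intros n0 Hn0 Hnk Hmin. split; [lia|]. intros m Hm.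
  destruct (Rlt_or_le (INR (sigma m) / INR m) (INR (sigma n0) / INR n0)) as [h|h]; auto.
  exfalso. pose proof (notKL_g n0 ltac:(lia) Hnk) as Hg0.
  destruct (Nat.lt_ge_cases 60 m) as [Hm60|Hm60].
  - pose proof (KL_g m ltac:(lia) (Hmin m ltac:(lia))).
    pose proof (g_mono m n0 ltac:(lia)). lra.
  - pose proof (sig_small m ltac:(lia)).
    destruct (Nat.lt_ge_cases n0 100) as [Hn|Hn].
    + pose proof (sig_mid n0 ltac:(lia)). pose proof g61.
      pose proof (g_mono 61 n0 ltac:(lia)). lra.
    + pose proof g100. pose proof (g_mono 100 n0 ltac:(lia)). lra.
Qed.

Theorem mainTheorem19 :
  (forall n0 : nat,
      (60 < n0)%nat -> ~ KL n0 ->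
      (forall m : nat, (60 < m < n0)%nat -> KL m) ->
      superabundant n0)
  /\
  ((forall n : nat, (60 < n)%nat -> KL n) <->
   (forall n : nat, (60 < n)%nat -> superabundant n -> KL n)).
Proof.
  split; [exact part1|]. split.
  - intros H n Hn _. auto.
  - intros H n. induction n as [n IH] using (well_founded_induction Wf_nat.lt_wf). intros Hn.
    unfold KL at 1. destruct (Rlt_dec (INR (sigma n)) (exp (harmonic n) * ln (harmonic n))) as [k|k]; auto.
    exfalso. apply k. apply H; auto. apply part1; auto. intros m Hm. apply IH; lia.
Qed.
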